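(* Let $X$ be a metric space, let $A\subseteq X$ be nonempty and let $Y$ be a hyperconvex metric space. Then the multivalued mapping $\Phi:\mathcal{N}(A,Y)\to\mathcal{P}(\mathcal{N}(X,Y))$, assigning to each $f$ the set of all $f'\in\mathcal{N}(X,Y)$ with $f'|_A=f$, is nonexpansive, i.e. $H(\Phi(f),\Phi(g))\le d_\infty(f,g)$ for all $f,g\in\mathcal{N}(A,Y)$.
   Context: A metric space $Y$ is hyperconvex if $\bigcap_\alpha B(x_\alpha,r_\alpha)\ne\emptyset$ for every family of points $x_\alpha\in Y$ and radii $r_\alpha>0$ with $d(x_\alpha,x_\beta)\le r_\alpha+r_\beta$ for all $\alpha,\beta$ ($B$ denotes closed balls). $\mathcal{N}(A,Y)$ is the set of bounded nonexpansive maps $A\to Y$ with the supremum metric $d_\infty$; $H$ is the Pompeiu–Hausdorff distance in $(\mathcal{N}(X,Y),d_\infty)$: $H(B,C)=\max\{\sup_{b\in B}\mathrm{dist}(b,C),\sup_{c\in C}\mathrm{dist}(c,B)\}$. *)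

(* Defs.v *)
From HB Require Import structures.
From mathcomp Require Import all_boot all_order all_algebra.
From mathcomp Require Import all_classical all_reals.
From mathcomp Require Import ereal.
Set Implicit Arguments. Unset Strict Implicit. Unset Printing Implicit Defensive.
Import Order.TTheory GRing.Theory Num.Theory.
Local Open Scope classical_set_scope.
Local Open Scope ring_scope.

Section Defs.
Variable R : realType.

Definition is_metric (T : Type) (d : T -> T -> R) : Prop :=
  [/\ forall x y, d x y = 0 <-> x = y,
      forall x y, d x y = d y x &
      forall x y z, d x z <= d x y + d y z].

Definition hyperconvex (Y : Type) (d : Y -> Y -> R) : Prop :=
  forall (I : Type) (x : I -> Y) (r : I -> R),
    (forall a, 0 < r a) ->
    (forall a b, d (x a) (x b) <= r a + r b) ->
    exists y, forall a, d (x a) y <= r a.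

(* f : S -> Y (represented by a function on X, only values on S matter)
   is bounded and nonexpansive on S *)
Definition bdd_nonexp (X Y : Type) (dX : X -> X -> R) (dY : Y -> Y -> R)
  (S : set X) (f : X -> Y) : Prop :=
  (exists (y0 : Y) (M : R), forall x, S x -> dY (f x) y0 <= M) /\
  (forall x x', S x -> S x' -> dY (f x) (f x') <= dX x x').

Definition dsup (X Y : Type) (dY : Y -> Y -> R) (S : set X) (f g : X -> Y)
  : \bar R := ereal_sup [set (dY (f x) (g x))%:E | x in S].

Definition distset (X Y : Type) (dY : Y -> Y -> R) (b : X -> Y)
  (C : set (X -> Y)) : \bar R :=
  ereal_inf [set dsup dY setT b c | c in C].

Definition hausdorff (X Y : Type) (dY : Y -> Y -> R) (B C : set (X -> Y))
  : \bar R :=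
  Order.max (ereal_sup [set distset dY b C | b in B])
            (ereal_sup [set distset dY c B | c in C]).

Definition Phi (X Y : Type) (dX : X -> X -> R) (dY : Y -> Y -> R)
  (A : set X) (f : X -> Y) : set (X -> Y) :=
  [set f' | bdd_nonexp dX dY setT f' /\ forall x, A x -> f' x = f x].

End Defs.

(* Main.v *)
Require Import Defs.
From HB Require Import structures.
From mathcomp Require Import all_boot all_order all_algebra.
From mathcomp Require Import all_classical all_reals.
From mathcomp Require Import ereal.
From mathcomp Require Import lra.
Import Order.TTheory GRing.Theory Num.Theory.
Local Open Scope classical_set_scope.
Local Open Scope ring_scope.

Section Metric.
Variables (R : realType) (T : Type) (d : T -> T -> R) (hd : is_metric d).
Lemma m_xx x : d x x = 0.
Proof. by case: hd => h _ _; apply h. Qed.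
Lemma m_sym x y : d x y = d y x.
Proof. by case: hd. Qed.
Lemma m_tri x y z : d x z <= d x y + d y z.
Proof. by case: hd. Qed.
Lemma m_ge0 x y : 0 <= d x y.
Proof. have := m_tri x y x; rewrite m_xx (m_sym y x) => h. lra. Qed.
Lemma m_eq0 x y : d x y = 0 -> x = y.
Proof. by case: hd => h _ _; apply h. Qed.
End Metric.
Arguments m_eq0 {R T d} hd {x y}.
Arguments m_xx {R T d} hd x.
Arguments m_sym {R T d} hd x y.
Arguments m_tri {R T d} hd x y z.
Arguments m_ge0 {R T d} hd x y.

Lemma extend_close (R : realType) (X Y : Type)
  (dX : X -> X -> R) (dY : Y -> Y -> R)
  (hX : is_metric dX) (hY : is_metric dY) (hyp : hyperconvex dY)
  (A : set X) (g f' : X -> Y) (r : R) :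
  0 < r -> (forall a a', A a -> A a' -> dY (g a) (g a') <= dX a a') ->
  (forall x x', dY (f' x) (f' x') <= dX x x') ->
  (forall a, A a -> dY (f' a) (g a) <= r) ->
  exists g', [/\ (forall x x', dY (g' x) (g' x') <= dX x x'),
     (forall a, A a -> g' a = g a) & forall x, dY (f' x) (g' x) <= r].
Proof.
move=> r0 gne fne fg.
pose base := [set p : X * Y | A p.1 /\ p.2 = g p.1].
pose good (G : set (X * Y)) :=
  (forall p q, G p -> G q -> dY p.2 q.2 <= dX p.1 q.1) /\
  (forall p, G p -> dY (f' p.1) p.2 <= r).
pose P := [set H | good (H `|` base)].
have goodb : forall p q, base p -> base q -> dY p.2 q.2 <= dX p.1 q.1.
  by move=> [x y] [x' y'] [/= ax ->] [/= ax' ->]; exact: gne.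
have [M [PM Mmax]] : exists M, P M /\ forall B, M `<` B -> ~ P B.
  apply: Zorn_bigcup => F FP Ftot; split.
  - move=> p q [[H FH Hp]|bp] [[H' FH' Hq]|bq].
    + case: (Ftot _ _ FH FH') => sub.
        by apply: (FP _ FH').1; left => //; apply: sub.
      by apply: (FP _ FH).1; left => //; apply: sub.
    + by apply: (FP _ FH).1; [left|right].
    + by apply: (FP _ FH').1; [right|left].
    + exact: goodb.
  - move=> p [[H FH Hp]|bp]; first by apply: (FP _ FH).2; left.
    by case: bp => ap ->; exact: fg.
pose G := M `|` base.
have [Gne Gcl] := PM.
have tot : forall x, exists y, G (x, y).
  move=> x0; apply: contrapT => nex.
  pose I := option {p : X * Y | G p}.
  pose xc (i : I) := if i is Some p then (sval p).2 else f' x0.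
  pose rc (i : I) := if i is Some p then dX x0 (sval p).1 else r.
  have [||y0 hy0] := hyp I xc rc.
  - case=> [[[x y] Gp]|] //=; rewrite lt_neqAle (m_ge0 hX) andbT.
    apply/eqP => /esym /(m_eq0 hX) ex; apply: nex; exists y; by rewrite ex.
  - have key : forall (p : {p : X * Y | G p}), dY (f' x0) (sval p).2 <= r + dX x0 (sval p).1.
      case=> [[x y] Gp] /=.
      apply: le_trans (m_tri hY _ (f' x) _) _.
      have := Gcl _ Gp; have := fne x0 x => /= h1 h2; lra.
    case=> [p|] [q|] /=.
    + apply: le_trans (Gne _ _ (svalP p) (svalP q)) _.
      by rewrite (m_sym hX x0); apply: (m_tri hX).
    + by rewrite (m_sym hY); have := key p; lra.
    + by have := key q; lra.
    + by rewrite (m_xx hY); lra.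
  - pose B := M `|` [set (x0, y0)].
    apply: (Mmax B).
      split; first by move=> p Mp; left.
      move=> sub; have : M (x0, y0) by apply: sub; right.
      by move=> h; apply: nex; exists y0; left.
    split.
    + have hp : forall p, G p -> dY p.2 y0 <= dX p.1 x0.
        move=> p Gp; have := hy0 (Some (exist _ p Gp)); rewrite /xc /rc /= (m_sym hX) => h; exact: h.

      move=> p q [[Mp|->]|bp] [[Mq|->]|bq] /=.
      all: try (apply: Gne; first [by left | by right]).
      all: try (by rewrite (m_xx hY) (m_xx hX)).
      all: try (by apply: hp; first [by left | by right]).
      all: try (by rewrite (m_sym hY) (m_sym hX); apply: hp; first [by left | by right]).
    + move=> p [[Mp|->]|bp]; first by apply: Gcl; left.
        by have := hy0 None.
      by apply: Gcl; right.
pose g' x := projT1 (cid (tot x)).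
have Gg' x : G (x, g' x) by rewrite /g'; case: cid.
exists g'; split.
- by move=> x x'; exact: (Gne _ _ (Gg' x) (Gg' x')).
- move=> a Aa; have hb : G (a, g a) by right.
  have := Gne _ _ (Gg' a) hb; rewrite /= (m_xx hX) => h.
  by apply: (m_eq0 hY); apply/le_anti; rewrite h (m_ge0 hY).
- by move=> x; exact: (Gcl _ (Gg' x)).
Qed.

Local Open Scope ereal_scope.

Lemma side (R : realType) (X Y : Type)
  (dX : X -> X -> R) (dY : Y -> Y -> R)
  (hX : is_metric dX) (hY : is_metric dY) (hyp : hyperconvex dY)
  (A : set X) (hA : A !=set0)
  (f g : X -> Y) (hg : bdd_nonexp dX dY A g) :
  ereal_sup [set distset dY b (Phi dX dY A g) | b in Phi dX dY A f]
     <= dsup dY A f g.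
Proof.
apply: ge_ereal_sup => _ [f' [[[y0 [M fbd]] fne] fA] <-].
have [a0 Aa0] := hA.
have ub : forall a, A a -> (dY (f a) (g a))%:E <= dsup dY A f g.
  by move=> a Aa; apply: ereal_sup_ubound; exists a.
case Es : (dsup dY A f g) => [d| |] in ub *; last 2 first.
- exact: leey.
- by have := ub a0 Aa0.
apply/lee_addgt0Pr => e e0.
have d0 : (0 <= d)%R.
  by apply: le_trans (m_ge0 hY (f a0) (g a0)) _; rewrite -lee_fin; exact: ub.
have [||||g' [g'ne g'A g'cl]] := @extend_close R X Y dX dY hX hY hyp A g f' (d + e)%R.
- by rewrite ltr_pwDr.
- by move=> a a' Aa Aa'; exact: hg.2.
- by move=> x x'; exact: fne.
- move=> a Aa; rewrite fA //; apply: le_trans (_ : d <= _)%R; first by rewrite -lee_fin; exact: ub.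
  by rewrite lerDl ltW.
apply: ge_ereal_inf; exists (dsup dY setT f' g').
  exists g' => //; split; last exact: g'A.
  split; last by move=> x x' _ _; exact: g'ne.
  exists y0, (M + (d + e))%R => x _.
  apply: le_trans (m_tri hY _ (f' x) _) _.
  rewrite (m_sym hY) addrC; apply: lerD; [exact: fbd | exact: g'cl].
apply: ge_ereal_sup => _ [x _ <-].
by rewrite -EFinD lee_fin.
Qed.

Theorem lemma5p3 (R : realType) (X Y : Type)
  (dX : X -> X -> R) (dY : Y -> Y -> R)
  (hX : is_metric dX) (hY : is_metric dY) (hyp : hyperconvex dY)
  (A : set X) (hA : A !=set0)
  (f g : X -> Y) (hf : bdd_nonexp dX dY A f) (hg : bdd_nonexp dX dY A g) :
  hausdorff dY (Phi dX dY A f) (Phi dX dY A g) <= dsup dY A f g.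
Proof.
rewrite /hausdorff ge_max; apply/andP; split; first exact: side.
have -> : dsup dY A f g = dsup dY A g f.
  rewrite /dsup; congr (ereal_sup (image _ _)); apply/funext => x.
  by rewrite (m_sym hY).
exact: side.
Qed.
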